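(* For $i\in[m]$ let $N_i=\begin{pmatrix}a_i&b_i\\ -\infty&d_i\end{pmatrix}$ with $a_i,b_i,d_i\in\mathbb{R}$. Then $N_i\otimes N_j=N_j\otimes N_i$ for all $i,j\in[m]$ if and only if one of the following holds: (i) $a_i\ge d_i$ for all $i\in[m]$, and there is $c\in\mathbb{R}$ with $c=b_k-a_k$ for every $k$ with $a_k>d_k$ and $c\ge b_k-a_k$ for every $k$ with $a_k=d_k$; or (ii) $a_i\le d_i$ for all $i\in[m]$, and there is $c\in\mathbb{R}$ with $c=d_k-b_k$ for every $k$ with $a_k<d_k$ and $c\le d_k-b_k$ for every $k$ with $a_k=d_k$.
   Context: The max-plus algebra is $\mathbb{R}_{\max}=\mathbb{R}\cup\{-\infty\}$ with $a\oplus b=\max\{a,b\}$ and $a\otimes b=a+b$ (additive identity $-\infty$, multiplicative identity $0$). Matrix products are defined as in linear algebra with these operations: $(A\otimes B)_{jk}=\max_l(A_{jl}+B_{lk})$. *)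

(* Defs.v *)
From HB Require Import structures.
From mathcomp Require Import all_boot all_order all_algebra.
From mathcomp Require Import reals.
Set Implicit Arguments. Unset Strict Implicit. Unset Printing Implicit Defensive.
Import Order.TTheory GRing.Theory Num.Theory.
Local Open Scope ring_scope.

(* The max-plus semiring R_max = R ∪ {-oo}: [None] encodes -oo, [Some x] encodes x. *)
Definition rmax (R : realType) := option R.

Definition mp_add (R : realType) (x y : rmax R) : rmax R :=
  match x, y with
  | None, _ => y
  | _, None => x
  | Some a, Some b => Some (Num.max a b)
  end.

Definition mp_mul (R : realType) (x y : rmax R) : rmax R :=
  match x, y with
  | Some a, Some b => Some (a + b)
  | _, _ => None
  end.

Definition mp_mulmx (R : realType) (p q r : nat)
  (A : 'M[rmax R]_(p, q)) (B : 'M[rmax R]_(q, r)) : 'M[rmax R]_(p, r) :=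
  \matrix_(j < p, k < r) \big[@mp_add R/None]_(l < q) mp_mul (A j l) (B l k).

Definition Nmat (R : realType) (a b d : R) : 'M[rmax R]_2 :=
  \matrix_(j < 2, k < 2)
    if (j : nat) == 0%N then (if (k : nat) == 0%N then Some a else Some b)
    else (if (k : nat) == 0%N then None else Some d).

(* Main.v *)
Require Import Defs.
From HB Require Import structures.
From mathcomp Require Import all_boot all_order all_algebra.
From mathcomp Require Import reals.
From mathcomp Require Import lra.
Import Order.TTheory GRing.Theory Num.Theory.
Local Open Scope ring_scope.

Lemma mulE (R : realType) (a b d a' b' d' : R) :
  mp_mulmx (Nmat a b d) (Nmat a' b' d') =
  \matrix_(j < 2, k < 2)
    if (j : nat) == 0%N then (if (k : nat) == 0%N then Some (a + a') else Some (Num.max (a + b') (b + d')))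
    else (if (k : nat) == 0%N then None else Some (d + d')).
Proof.
apply/matrixP => i j; rewrite !mxE !big_ord_recl big_ord0 /= !mxE /=.
case: i => [[|[|i]] Hi] //=; case: j => [[|[|j]] Hj] //=.
Qed.

Lemma commE (R : realType) (a b d a' b' d' : R) :
  mp_mulmx (Nmat a b d) (Nmat a' b' d') = mp_mulmx (Nmat a' b' d') (Nmat a b d)
  <-> Num.max (a + b') (b + d') = Num.max (a' + b) (b' + d).
Proof.
rewrite !mulE; split.
  by move/matrixP/(_ ord0 (lift ord0 ord0)); rewrite !mxE /= => -[].
move=> H; apply/matrixP => i j; rewrite !mxE.
case: i => [[|[|i]] Hi] //=; case: j => [[|[|j]] Hj] //=.
- by rewrite addrC.
- by rewrite H.
- by rewrite addrC.
Qed.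

Ltac maxes := repeat match goal with |- context[Num.max ?x ?y] => case: (leP x y) => ? end.

Section L.
Variable R : realType.
Implicit Types ai bi di aj bj dj c : R.

Lemma L1 ai bi di aj bj dj : Num.max (ai + bj) (bi + dj) = Num.max (aj + bi) (bj + di) ->
  di < ai -> aj < dj -> False.
Proof. maxes; lra. Qed.
Lemma L2 ai bi di aj bj dj : Num.max (ai + bj) (bi + dj) = Num.max (aj + bi) (bj + di) ->
  di < ai -> dj < aj -> bi - ai = bj - aj.
Proof. maxes; lra. Qed.
Lemma L3 ai bi di aj bj dj : Num.max (ai + bj) (bi + dj) = Num.max (aj + bi) (bj + di) ->
  di < ai -> aj = dj -> bj - aj <= bi - ai.
Proof. maxes; lra. Qed.
Lemma L4 ai bi di aj bj dj : Num.max (ai + bj) (bi + dj) = Num.max (aj + bi) (bj + di) ->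
  ai < di -> aj < dj -> di - bi = dj - bj.
Proof. maxes; lra. Qed.
Lemma L5 ai bi di aj bj dj : Num.max (ai + bj) (bi + dj) = Num.max (aj + bi) (bj + di) ->
  ai < di -> aj = dj -> di - bi <= dj - bj.
Proof. maxes; lra. Qed.
Lemma R1 ai bi di aj bj dj c : (di < ai /\ c = bi - ai \/ ai = di /\ bi - ai <= c) ->
  (dj < aj /\ c = bj - aj \/ aj = dj /\ bj - aj <= c) ->
  Num.max (ai + bj) (bi + dj) = Num.max (aj + bi) (bj + di).
Proof. move=> [[? ?]|[? ?]] [[? ?]|[? ?]]; maxes; lra. Qed.
Lemma R2 ai bi di aj bj dj c : (ai < di /\ c = di - bi \/ ai = di /\ c <= di - bi) ->
  (aj < dj /\ c = dj - bj \/ aj = dj /\ c <= dj - bj) ->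
  Num.max (ai + bj) (bi + dj) = Num.max (aj + bi) (bj + di).
Proof. move=> [[? ?]|[? ?]] [[? ?]|[? ?]]; maxes; lra. Qed.
End L.
Arguments L1 {R ai bi di aj bj dj}. Arguments L2 {R ai bi di aj bj dj}. Arguments L3 {R ai bi di aj bj dj}. Arguments L4 {R ai bi di aj bj dj}. Arguments L5 {R ai bi di aj bj dj}. Arguments R1 {R ai bi di aj bj dj c}. Arguments R2 {R ai bi di aj bj dj c}.

Theorem mainTheorem20 (R : realType) (m : nat) (a b d : 'I_m -> R) :
  (forall i j : 'I_m,
     mp_mulmx (Nmat (a i) (b i) (d i)) (Nmat (a j) (b j) (d j))
     = mp_mulmx (Nmat (a j) (b j) (d j)) (Nmat (a i) (b i) (d i)))
  <->
  (((forall i, d i <= a i) /\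
     exists c : R, (forall k, d k < a k -> c = b k - a k) /\
                   (forall k, a k = d k -> b k - a k <= c))
   \/
   ((forall i, a i <= d i) /\
     exists c : R, (forall k, a k < d k -> c = d k - b k) /\
                   (forall k, a k = d k -> c <= d k - b k))).
Proof.
split.
- move=> H.
  have P (i j : 'I_m) := proj1 (commE _ _ _ _ _ _ _) (H i j).
  case: (boolP [exists i, d i < a i]) => [/existsP [i0 Hi0]|/existsP Hn].
    left; split.
      move=> i; rewrite leNgt; apply/negP => h. exact: (L1 (P i0 i) Hi0 h).
    exists (b i0 - a i0); split.
      by move=> k hk; exact: (L2 (P i0 k) Hi0 hk).
    by move=> k hk; exact: (L3 (P i0 k) Hi0 hk).
  have Hle : forall i, a i <= d i.
    by move=> i; rewrite leNgt; apply/negP => h; apply: Hn; exists i.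
  right; split => //.
  case: (boolP [exists i, a i < d i]) => [/existsP [i0 Hi0]|/existsP Hn2].
    exists (d i0 - b i0); split.
      by move=> k hk; exact: (L4 (P i0 k) Hi0 hk).
    by move=> k hk; exact: (L5 (P i0 k) Hi0 hk).
  exists (\big[Order.min/0]_k (d k - b k)); split.
    by move=> k hk; exfalso; apply: Hn2; exists k.
  by move=> k _; exact: bigmin_le.
- move=> [[Hle [c [Hs He]]]|[Hle [c [Hs He]]]] i j; apply/commE.
  + have E k : (d k < a k /\ c = b k - a k \/ a k = d k /\ b k - a k <= c).
      move: (Hle k); rewrite le_eqVlt => /orP [/eqP h|h].
        by right; split; [rewrite h|apply: He; rewrite h].
      by left; split => //; apply: Hs.
    exact: R1 (E i) (E j).
  + have E k : (a k < d k /\ c = d k - b k \/ a k = d k /\ c <= d k - b k).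
      move: (Hle k); rewrite le_eqVlt => /orP [/eqP h|h].
        by right; split => //; apply: He.
      by left; split => //; apply: Hs.
    exact: R2 (E i) (E j).
Qed.
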